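(* Let $a_1,\dots,a_{k-1}, b, \tilde b \in \mathbb{R}^n$ with $b,\tilde b\neq 0$, and let $U=\mathrm{span}\{a_1,\dots,a_{k-1}\}$, $V=\mathrm{span}\{a_1,\dots,a_{k-1},b\}$, $\tilde V=\mathrm{span}\{a_1,\dots,a_{k-1},\tilde b\}$. Then $$\theta(V,\tilde V)\;\le\;\frac{\pi}{2}\,\frac{\theta(\tilde b, b)}{\theta(\tilde b, U)},$$ where the right-hand side is interpreted as $+\infty$ if $\theta(\tilde b,U)=0$.
   Context: For nonzero vectors $a,b$, $\theta(a,b)$ is the angle between them. For a nonzero vector $a$ and a subspace $V$, $\theta(a,V)=\min_{0\ne b\in V}\theta(a,b)$ (taken to be $\pi/2$ if $V=\{0\}$). For subspaces $U,V$, $\theta(U,V)=\max_{0\ne u\in U}\theta(u,V)$; thus $\theta(U,V)\le\alpha$ iff every nonzero $u\in U$ has some $v\in V$ with $\theta(u,v)\le\alpha$. *)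

(* Defs.v *)
(* real Euclidean space R^n, vectors as nat -> R restricted to coords < n. *)
From Stdlib Require Import Reals Lra Lia.
Open Scope R_scope.

Fixpoint fsum (m : nat) (f : nat -> R) : R :=
  match m with O => 0 | S m' => fsum m' f + f m' end.

Definition vec := nat -> R.

Definition dot (n : nat) (x y : vec) : R := fsum n (fun i => x i * y i).
Definition vnorm (n : nat) (x : vec) : R := sqrt (dot n x x).
Definition nonzero_vec (n : nat) (x : vec) : Prop := exists i, (i < n)%nat /\ x i <> 0.

Definition angle (n : nat) (x y : vec) : R :=
  acos (dot n x y / (vnorm n x * vnorm n y)).

Definition in_span (n m : nat) (a : nat -> vec) (v : vec) : Prop :=
  exists c : nat -> R, forall i, (i < n)%nat -> v i = fsum m (fun j => c j * a j i).

Definition in_span_ext (n m : nat) (a : nat -> vec) (b v : vec) : Prop :=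
  exists (c : nat -> R) (d : R),
    forall i, (i < n)%nat -> v i = fsum m (fun j => c j * a j i) + d * b i.

Definition angle_to_subspace (n : nat) (x : vec) (W : vec -> Prop) (t : R) : Prop :=
  ((forall w, W w -> ~ nonzero_vec n w) /\ t = PI / 2) \/
  ((exists w, W w /\ nonzero_vec n w /\ angle n x w = t) /\
   (forall w, W w -> nonzero_vec n w -> t <= angle n x w)).

(* Main.v *)
Require Import Defs.
From Stdlib Require Import Reals Lra Lia Classical.
From Coquelicot Require Import Coquelicot.
Open Scope R_scope.

Lemma der_cont (f df : R -> R) x : is_derive f x (df x) -> continuity_pt f x.
Proof.
  intro H. apply continuity_pt_filterlim.
  apply (ex_derive_continuous f x). exists (df x). exact H.
Qed.

Lemma mvt (f df : R -> R) a b : a < b -> (forall x, is_derive f x (df x)) ->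
  exists c, a <= c <= b /\ f b - f a = df c * (b - a).
Proof.
  intros Hab H.
  destruct (MVT_gen f a b df) as [c [Hc E]].
  - intros; apply H.
  - intros; apply (der_cont f df); apply H.
  - exists c. rewrite Rmin_left, Rmax_right in Hc by lra. auto.
Qed.

Lemma concave0 (G G1 G2 : R -> R) T :
  (forall x, is_derive G x (G1 x)) -> (forall x, is_derive G1 x (G2 x)) ->
  (forall x, 0 <= x <= T -> G2 x <= 0) -> G 0 = 0 -> G T = 0 ->
  forall x, 0 <= x <= T -> 0 <= G x.
Proof.
  intros D1 D2 H2 G0 GT x Hx.
  destruct (Rle_or_lt 0 (G x)) as [h|h]; [exact h|exfalso].
  assert (0 < x) by (destruct (Req_dec x 0); [subst; lra|lra]).
  assert (x < T) by (destruct (Req_dec x T); [subst; lra|lra]).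
  destruct (mvt G G1 0 x) as [c1 [Hc1 E1]]; auto.
  destruct (mvt G G1 x T) as [c2 [Hc2 E2]]; auto.
  assert (G1 c1 < 0).
  { destruct (Rle_or_lt 0 (G1 c1)); auto. nra. }
  assert (0 < G1 c2).
  { destruct (Rle_or_lt (G1 c2) 0); auto. nra. }
  destruct (Rle_or_lt c2 c1).
  { assert (c1 = c2) by lra. subst. lra. }
  destruct (mvt G1 G2 c1 c2) as [c3 [Hc3 E3]]; auto.
  assert (G2 c3 <= 0) by (apply H2; lra). nra.
Qed.

Lemma jordan t : 0 <= t <= PI/2 -> 2 * t / PI <= sin t.
Proof.
  intro Ht. pose proof PI_RGT_0.
  assert (0 <= sin t - 2 * t / PI).
  { apply (concave0 (fun t => sin t - 2 * t / PI) (fun t => cos t - 2 / PI)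
      (fun t => - sin t) (PI/2)); auto.
    - intro y. auto_derive; auto. field. lra.
    - intro y. auto_derive; auto. ring.
    - intros y Hy. pose proof (sin_ge_0 y). lra.
    - rewrite sin_0. field. lra.
    - rewrite sin_PI2. field. lra. }
  lra.
Qed.

Lemma key_trig phi t : 0 <= phi -> phi <= t -> 0 < t -> t <= PI/2 ->
  sin phi <= sin t * sin (PI * phi / (2 * t)).
Proof.
  intros H0 H1 H2 H3. pose proof PI_RGT_0.
  set (k := PI / (2 * t)).
  assert (Hk : 1 <= k). { unfold k. apply Rmult_le_reg_r with (2*t). lra.
    field_simplify; lra. }
  assert (E : PI * phi / (2 * t) = k * phi) by (unfold k; field; lra).
  rewrite E.
  assert (Hs : 2 * t / PI <= sin t) by (apply jordan; lra).
  assert (0 <= sin t * sin (k * phi) - sin phi).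
  { apply (concave0 (fun y => sin t * sin (k * y) - sin y)
      (fun y => sin t * (k * cos (k * y)) - cos y)
      (fun y => - sin t * (k * (k * sin (k * y))) + sin y) t); auto.
    - intro y. auto_derive; auto. ring.
    - intro y. auto_derive; auto. ring.
    - intros y Hy.
      assert (Hky : k * y <= PI / 2).
      { unfold k. apply Rmult_le_reg_r with (2*t). lra.
        field_simplify; try lra. nra. }
      assert (sin y <= sin (k * y)).
      { apply sin_incr_1; nra. }
      assert (0 <= sin (k * y)) by (apply sin_ge_0; nra).
      assert (sin t * k >= 1).
      { apply Rle_ge. apply Rle_trans with (2 * t / PI * k).
        - right. unfold k. field. lra.
        - apply Rmult_le_compat_r; lra. }
      assert (sin t * (k * (k * sin (k * y))) >= sin (k*y)).
      { replace (sin t * (k * (k * sin (k * y)))) with ((sin t * k) * (k * sin (k*y))) by ring.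
        assert (k * sin (k*y) >= sin (k*y)) by nra. nra. }
      lra.
    - rewrite Rmult_0_r, sin_0. ring.
    - replace (k * t) with (PI/2) by (unfold k; field; lra). rewrite sin_PI2. ring. }
  lra.
Qed.
Lemma core p q x y B N s e : 0 <= p -> 0 < q -> 0 <= x -> 0 < y -> 0 < B -> 0 < N ->
  B*B = p*p+q*q -> N*N = x*x+y*y -> s <= p*x -> p*N < s+e ->
  0 <= e /\ q*q*(1 - (e/(y*q))^2) <= B*B*(1 - ((s+e)/(B*N))^2).
Proof.
  intros. assert (x <= N) by nra.
  assert (He : 0 <= e) by nra. split; auto.
  assert (E1 : q*q*(1 - (e/(y*q))^2) = (q*q*y*y - e*e)/(y*y)) by (field; lra).
  assert (E2 : B*B*(1 - ((s+e)/(B*N))^2) = (B*B*N*N - (s+e)*(s+e))/(N*N)) by (field; lra).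
  rewrite E1, E2.
  assert (0 <= s + e) by nra.
  assert ((s+e)*(s+e) <= (p*x+e)*(p*x+e)) by nra.
  assert (Id : (B*B*N*N - (p*x+e)*(p*x+e))*(y*y) - (q*q*y*y - e*e)*(N*N) = (p*y*y - x*e)^2).
  { replace (B*B*N*N) with ((B*B)*(N*N)) by ring. rewrite H5, H6. ring. }
  apply Rmult_le_reg_r with (y*y*(N*N)). apply Rmult_lt_0_compat; apply Rmult_lt_0_compat; lra.
  replace ((q * q * y * y - e * e) / (y * y) * (y * y * (N * N))) with ((q * q * y * y - e * e) * (N*N)) by (field; lra).
  replace ((B * B * N * N - (s + e) * (s + e)) / (N * N) * (y * y * (N * N))) with ((B * B * N * N - (s + e) * (s + e)) * (y*y)) by (field; lra).
  assert (0 <= (p*y*y - x*e)^2) by apply pow2_ge_0.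
  nra.
Qed.

Lemma fsum_ext m f g : (forall i, (i < m)%nat -> f i = g i) -> fsum m f = fsum m g.
Proof. induction m; intros H; simpl; auto. rewrite IHm, H; auto. Qed.
Lemma fsum_plus m f g : fsum m (fun i => f i + g i) = fsum m f + fsum m g.
Proof. induction m; simpl; [ring|rewrite IHm; ring]. Qed.
Lemma fsum_scal m c f : fsum m (fun i => c * f i) = c * fsum m f.
Proof. induction m; simpl; [ring|rewrite IHm; ring]. Qed.
Lemma fsum_zero m f : (forall i, (i < m)%nat -> f i = 0) -> fsum m f = 0.
Proof. induction m; intros H; simpl; auto. rewrite IHm, H; auto. ring. Qed.
Lemma fsum_swap n m (f : nat -> nat -> R) :
  fsum n (fun i => fsum m (fun j => f i j)) = fsum m (fun j => fsum n (fun i => f i j)).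
Proof.
  induction m; simpl.
  - apply fsum_zero; auto.
  - rewrite fsum_plus, IHm. reflexivity.
Qed.
Lemma fsum_nonneg m f : (forall i, (i < m)%nat -> 0 <= f i) -> 0 <= fsum m f.
Proof. induction m; intros H; simpl. lra.
  assert (0 <= f m) by auto. assert (0 <= fsum m f) by auto. lra. Qed.
Lemma fsum_nonneg_zero m f : (forall i, (i < m)%nat -> 0 <= f i) -> fsum m f = 0 ->
  forall i, (i < m)%nat -> f i = 0.
Proof.
  induction m; intros H E i Hi; [lia|]. simpl in E.
  assert (0 <= f m) by auto. assert (0 <= fsum m f) by (apply fsum_nonneg; auto).
  destruct (Nat.eq_dec i m). subst; lra. apply IHm; auto. lra. lia.
Qed.

Definition vadd (x y : vec) : vec := fun i => x i + y i.
Definition vsub (x y : vec) : vec := fun i => x i - y i.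
Definition vscal (c : R) (x : vec) : vec := fun i => c * x i.

Section V.
Variable n : nat.

Lemma dot_ext x y x' y' : (forall i, (i < n)%nat -> x i = x' i) ->
  (forall i, (i < n)%nat -> y i = y' i) -> dot n x y = dot n x' y'.
Proof. intros. unfold dot. apply fsum_ext. intros. rewrite H, H0; auto. Qed.
Lemma dot_sym x y : dot n x y = dot n y x.
Proof. unfold dot. apply fsum_ext. intros; ring. Qed.
Lemma dot_add_l x y z : dot n (vadd x y) z = dot n x z + dot n y z.
Proof. unfold dot, vadd. rewrite <- fsum_plus. apply fsum_ext; intros; ring. Qed.
Lemma dot_add_r x y z : dot n z (vadd x y) = dot n z x + dot n z y.
Proof. unfold dot, vadd. rewrite <- fsum_plus. apply fsum_ext; intros; ring. Qed.
Lemma dot_sub_l x y z : dot n (vsub x y) z = dot n x z - dot n y z.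
Proof. unfold dot, vsub. replace (fsum n (fun i => x i * z i) - fsum n (fun i => y i * z i))
  with (fsum n (fun i => x i * z i) + (-1) * fsum n (fun i => y i * z i)) by ring.
  rewrite <- fsum_scal, <- fsum_plus. apply fsum_ext; intros; ring. Qed.
Lemma dot_sub_r x y z : dot n z (vsub x y) = dot n z x - dot n z y.
Proof. rewrite dot_sym, dot_sub_l, (dot_sym x), (dot_sym y). auto. Qed.
Lemma dot_scal_l c x y : dot n (vscal c x) y = c * dot n x y.
Proof. unfold dot, vscal. rewrite <- fsum_scal. apply fsum_ext; intros; ring. Qed.
Lemma dot_scal_r c x y : dot n y (vscal c x) = c * dot n y x.
Proof. unfold dot, vscal. rewrite <- fsum_scal. apply fsum_ext; intros; ring. Qed.
Lemma dot_pos x : 0 <= dot n x x.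
Proof. unfold dot. apply fsum_nonneg. intros. apply Rle_0_sqr. Qed.
Lemma dot_zero_coords x : dot n x x = 0 -> forall i, (i < n)%nat -> x i = 0.
Proof. intros E i Hi. pose proof (fsum_nonneg_zero n (fun i => x i * x i)) as K.
  assert (x i * x i = 0). { apply K; auto. intros; apply Rle_0_sqr. }
  destruct (Rmult_integral _ _ H); auto. Qed.
Lemma nonzero_dot x : nonzero_vec n x <-> 0 < dot n x x.
Proof. split.
  - intros [i [Hi Hx]]. destruct (dot_pos x) as [h|h]; auto.
    exfalso. apply Hx. apply dot_zero_coords; auto.
  - intro H. apply NNPP. intro K. assert (dot n x x = 0); [|lra].
    unfold dot. apply fsum_zero. intros i Hi.
    assert (x i = 0). { apply NNPP. intro. apply K. exists i; auto. }
    rewrite H0; ring. Qed.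
Lemma zero_dot x y : ~ nonzero_vec n x -> dot n x y = 0.
Proof. intro K. unfold dot. apply fsum_zero. intros i Hi.
  assert (x i = 0). { apply NNPP. intro. apply K. exists i; auto. }
  rewrite H; ring. Qed.

Lemma cauchy_schwarz x y : (dot n x y)^2 <= dot n x x * dot n y y.
Proof.
  destruct (dot_pos y) as [Hy|Hy].
  - set (l := dot n x y / dot n y y).
    assert (0 <= dot n (vsub x (vscal l y)) (vsub x (vscal l y))) by apply dot_pos.
    rewrite !dot_sub_l, !dot_sub_r, !dot_scal_l, !dot_scal_r in H.
    rewrite (dot_sym y x) in H.
    assert (El : l * dot n y y = dot n x y) by (unfold l; field; lra).
    assert (0 <= dot n x x - l * dot n x y) by nra.
    assert (0 <= dot n y y * (dot n x x - l * dot n x y)) by nra.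
    nra.
  - assert (~ nonzero_vec n y). { rewrite nonzero_dot. lra. }
    rewrite dot_sym, zero_dot by auto. rewrite <- Hy. nra.
Qed.

Lemma vnorm_sq x : vnorm n x * vnorm n x = dot n x x.
Proof. unfold vnorm. apply sqrt_sqrt, dot_pos. Qed.
Lemma vnorm_nonneg x : 0 <= vnorm n x.
Proof. apply sqrt_pos. Qed.
Lemma vnorm_pos x : nonzero_vec n x -> 0 < vnorm n x.
Proof. intro H. apply nonzero_dot in H. unfold vnorm. apply sqrt_lt_R0; auto. Qed.

Lemma cs_abs x y : Rabs (dot n x y) <= vnorm n x * vnorm n y.
Proof.
  pose proof (cauchy_schwarz x y). pose proof (vnorm_sq x). pose proof (vnorm_sq y).
  pose proof (vnorm_nonneg x). pose proof (vnorm_nonneg y).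
  apply Rsqr_incr_0_var. unfold Rsqr. rewrite <- Rabs_mult, Rabs_right by (apply Rle_ge; nra).
  nra. nra.
Qed.
Lemma cs_le x y : dot n x y <= vnorm n x * vnorm n y.
Proof. pose proof (cs_abs x y). pose proof (Rle_abs (dot n x y)). lra. Qed.
Lemma cs_ge x y : - (vnorm n x * vnorm n y) <= dot n x y.
Proof. pose proof (cs_abs x y). pose proof (Rle_abs (- dot n x y)). rewrite Rabs_Ropp in H0. lra. Qed.

Lemma ratio_bound x y : nonzero_vec n x -> nonzero_vec n y ->
  -1 <= dot n x y / (vnorm n x * vnorm n y) <= 1.
Proof. intros Hx Hy. pose proof (vnorm_pos x Hx). pose proof (vnorm_pos y Hy).
  assert (0 < vnorm n x * vnorm n y) by nra.
  pose proof (cs_le x y). pose proof (cs_ge x y).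
  split.
  - apply Rmult_le_reg_r with (vnorm n x * vnorm n y); auto.
    unfold Rdiv. rewrite Rmult_assoc, Rinv_l by lra. lra.
  - apply Rmult_le_reg_r with (vnorm n x * vnorm n y); auto.
    unfold Rdiv. rewrite Rmult_assoc, Rinv_l by lra. lra.
Qed.

Variable m : nat.
Variable a : nat -> vec.

Lemma span_zero : in_span n m a (fun _ => 0).
Proof. exists (fun _ => 0). intros. symmetry. apply fsum_zero. intros; ring. Qed.
Lemma span_add x y : in_span n m a x -> in_span n m a y -> in_span n m a (vadd x y).
Proof. intros [c Hc] [d Hd]. exists (fun j => c j + d j). intros i Hi.
  unfold vadd. rewrite Hc, Hd by auto. rewrite <- fsum_plus. apply fsum_ext; intros; ring. Qed.
Lemma span_scal k x : in_span n m a x -> in_span n m a (vscal k x).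
Proof. intros [c Hc]. exists (fun j => k * c j). intros i Hi.
  unfold vscal. rewrite Hc by auto. rewrite <- fsum_scal. apply fsum_ext; intros; ring. Qed.
Lemma span_sub x y : in_span n m a x -> in_span n m a y -> in_span n m a (vsub x y).
Proof. intros Hx Hy. destruct (span_add x (vscal (-1) y) Hx (span_scal _ _ Hy)) as [c Hc].
  exists c. intros i Hi. rewrite <- Hc by auto. unfold vsub, vadd, vscal. ring. Qed.
Lemma span_ext x y : (forall i, (i < n)%nat -> x i = y i) -> in_span n m a x -> in_span n m a y.
Proof. intros E [c Hc]. exists c. intros. rewrite <- E; auto. Qed.

Lemma orth_span x : (forall j, (j < m)%nat -> dot n x (a j) = 0) ->
  forall w, in_span n m a w -> dot n x w = 0.
Proof.
  intros H w [c Hc]. unfold dot.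
  rewrite (fsum_ext n _ (fun i => fsum m (fun j => c j * (x i * a j i)))).
  - rewrite fsum_swap. apply fsum_zero. intros j Hj. rewrite fsum_scal.
    specialize (H j Hj). unfold dot in H. rewrite H. ring.
  - intros i Hi. rewrite Hc by auto. rewrite <- fsum_scal. apply fsum_ext; intros; ring.
Qed.
End V.

Lemma span_mono n m a x : in_span n m a x -> in_span n (S m) a x.
Proof. intros [c Hc]. exists (fun j => if Nat.eqb j m then 0 else c j).
  intros i Hi. simpl. rewrite Nat.eqb_refl, Hc by auto.
  rewrite Rmult_0_l, Rplus_0_r. apply fsum_ext. intros j Hj.
  destruct (Nat.eqb_spec j m); [lia|auto]. Qed.
Lemma span_last n m a : in_span n (S m) a (a m).
Proof. exists (fun j => if Nat.eqb j m then 1 else 0).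
  intros i Hi. simpl. rewrite Nat.eqb_refl. rewrite fsum_zero. ring.
  intros j Hj. destruct (Nat.eqb_spec j m); [lia|ring]. Qed.

Lemma span_mono_le n m m' a x : (m <= m')%nat -> in_span n m a x -> in_span n m' a x.
Proof. induction 1; auto. intros. apply span_mono; auto. Qed.
Lemma span_gen n m a j : (j < m)%nat -> in_span n m a (a j).
Proof. intros. apply span_mono_le with (S j). lia. apply span_last. Qed.

Lemma proj_ex n m a x : exists p, in_span n m a p /\
  forall w, in_span n m a w -> dot n (vsub x p) w = 0.
Proof.
  revert x. induction m as [|m IH]; intro x.
  - exists (fun _ => 0). split. apply span_zero.
    intros w Hw. apply orth_span with 0%nat a; auto. intros; lia.
  - destruct (IH (a m)) as [q [Hq Oq]].
    destruct (IH x) as [p [Hp Op]].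
    set (r := vsub (a m) q).
    assert (Rr : forall w, in_span n m a w -> dot n r w = 0) by exact Oq.
    destruct (dot_pos n r) as [Hr|Hr].
    + set (c := dot n (vsub x p) r / dot n r r).
      exists (vadd p (vscal c r)). split.
      * apply span_add. apply span_mono; auto. apply span_scal. unfold r.
        apply span_sub. apply span_last. apply span_mono; auto.
      * apply orth_span. intros j Hj.
        assert (Hxp : forall w, in_span n m a w -> dot n (vsub x (vadd p (vscal c r))) w = 0).
        { intros w Hw. rewrite (dot_ext n _ _ (vsub (vsub x p) (vscal c r)) w).
          rewrite dot_sub_l, dot_scal_l, Op, Rr by auto. ring.
          intros; unfold vsub, vadd, vscal; ring. auto. }
        destruct (Nat.eq_dec j m).
        -- subst j. rewrite (dot_ext n _ (a m) (vsub (vsub x p) (vscal c r)) (vadd q r)).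
           rewrite dot_add_r, !(dot_sub_l n (vsub x p) (vscal c r)), !dot_scal_l.
           rewrite (Op q Hq), (Rr q Hq). unfold c. field. lra.
           intros; unfold vsub, vadd, vscal; ring.
           intros; unfold r, vsub, vadd; ring.
        -- apply Hxp. apply span_gen. lia.
    + exists p. split. apply span_mono; auto.
      apply orth_span. intros j Hj.
      destruct (Nat.eq_dec j m).
      * subst j. rewrite (dot_ext n _ (a m) (vsub x p) q). apply Op; auto.
        auto. intros i Hi. pose proof (dot_zero_coords n r (eq_sym Hr) i Hi).
        unfold r, vsub in H. lra.
      * apply Op. apply span_gen. lia.
Qed.

Lemma acos_le x y : -1 <= x <= 1 -> -1 <= y <= 1 -> x <= y -> acos y <= acos x.
Proof. intros Hx Hy H. destruct (Rle_or_lt (acos y) (acos x)); auto.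
  pose proof (acos_bound x). pose proof (acos_bound y).
  pose proof (cos_decreasing_1 (acos x) (acos y)). rewrite !cos_acos in H3 by auto.
  assert (y < x) by (apply H3; lra). lra. Qed.

Lemma acos_lt_rev x y : -1 <= x <= 1 -> -1 <= y <= 1 -> acos x < acos y -> y < x.
Proof. intros. destruct (Rlt_or_le y x); auto. pose proof (acos_le x y H H0 H2). lra. Qed.

Lemma ext_iff n m a b v : in_span_ext n m a b v <->
  exists w d, in_span n m a w /\ forall i, (i < n)%nat -> v i = w i + d * b i.
Proof. split.
  - intros [c [d H]]. exists (fun i => fsum m (fun j => c j * a j i)), d. split; auto.
    exists c. auto.
  - intros [w [d [[c Hc] H]]]. exists c, d. intros. rewrite H, Hc; auto. Qed.

Lemma angle_self n u : nonzero_vec n u -> angle n u u = 0.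
Proof. intros H. unfold angle. pose proof (vnorm_pos n u H).
  rewrite <- (vnorm_sq n u). replace (vnorm n u * vnorm n u / (vnorm n u * vnorm n u)) with 1
  by (field; lra). apply acos_1. Qed.

Lemma angle_le_pi2 n x y : nonzero_vec n x -> nonzero_vec n y -> 0 <= dot n x y ->
  angle n x y <= PI / 2.
Proof. intros Hx Hy H. unfold angle. rewrite <- acos_0. apply acos_le.
  lra. apply ratio_bound; auto.
  pose proof (vnorm_pos n x Hx). pose proof (vnorm_pos n y Hy).
  apply Rmult_le_pos; auto. left; apply Rinv_0_lt_compat; nra. Qed.

Lemma nonzero_ext n x y : (forall i, (i < n)%nat -> x i = y i) -> nonzero_vec n x -> nonzero_vec n y.
Proof. intros E [i [Hi Hx]]. exists i. rewrite <- E; auto. Qed.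

Lemma vnorm_ext n x y : (forall i, (i < n)%nat -> x i = y i) -> vnorm n x = vnorm n y.
Proof. intros E. unfold vnorm. f_equal. apply dot_ext; auto. Qed.
Lemma angle_ext n x y x' y' : (forall i, (i < n)%nat -> x i = x' i) ->
  (forall i, (i < n)%nat -> y i = y' i) -> angle n x y = angle n x' y'.
Proof. intros. unfold angle. rewrite (dot_ext n x y x' y'), (vnorm_ext n x x'), (vnorm_ext n y y'); auto. Qed.

Theorem lemma2 (n m : nat) (a : nat -> vec) (b bt : vec) :
  nonzero_vec n b -> nonzero_vec n bt ->
  exists t : R,
    angle_to_subspace n bt (in_span n m a) t /\
    (0 < t ->
     forall u, in_span_ext n m a b u -> nonzero_vec n u ->
       exists v, in_span_ext n m a bt v /\ nonzero_vec n v /\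
         angle n u v <= (PI / 2) * (angle n bt b / t)).
Proof.
  intros Hb Hbt.
  destruct (proj_ex n m a bt) as [P [HP OP]].
  set (Q := vsub bt P).
  set (B := vnorm n bt). set (p := vnorm n P). set (q := vnorm n Q).
  assert (HB : 0 < B) by (apply vnorm_pos; auto).
  assert (Hp : 0 <= p) by apply vnorm_nonneg.
  assert (Hq : 0 <= q) by apply vnorm_nonneg.
  assert (BQP : forall i, (i < n)%nat -> bt i = vadd Q P i) by (intros; unfold Q, vadd, vsub; ring).
  assert (DS : forall w, in_span n m a w -> dot n bt w = dot n P w).
  { intros w Hw. rewrite (dot_ext n bt w (vadd Q P) w), dot_add_l; auto.
    unfold Q. rewrite OP; auto. ring. }
  assert (EP : dot n bt P = p * p) by (rewrite DS, <- vnorm_sq; auto).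
  assert (EB : B * B = p * p + q * q).
  { unfold B, p, q. rewrite !vnorm_sq. rewrite (dot_ext n bt bt (vadd Q P) (vadd Q P)) by auto.
    assert (QP : dot n Q P = 0) by (apply OP; auto).
    rewrite !dot_add_l, !dot_add_r. rewrite (dot_sym n P Q), QP. ring. }
  assert (HpB : 0 <= p / B <= 1).
  { split. apply Rmult_le_pos; [lra| left; apply Rinv_0_lt_compat; lra].
    apply Rmult_le_reg_r with B; auto. unfold Rdiv. rewrite Rmult_assoc, Rinv_l by lra. nra. }
  set (t := acos (p / B)).
  exists t. split.
  - destruct (Req_dec p 0) as [p0|pnz].
    + assert (Ht : t = PI / 2) by (unfold t; rewrite p0, Rdiv_0_l; apply acos_0).
      assert (Pz : ~ nonzero_vec n P).
      { rewrite nonzero_dot, <- vnorm_sq. fold p. rewrite p0. lra. }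
      assert (D0 : forall w, in_span n m a w -> dot n bt w = 0).
      { intros w Hw. rewrite DS by auto. apply zero_dot; auto. }
      destruct (classic (exists w, in_span n m a w /\ nonzero_vec n w)) as [[w [Hw Hnw]]|NE].
      * right. split.
        -- exists w. split; auto. split; auto. unfold angle. rewrite D0, Rdiv_0_l, acos_0 by auto. auto.
        -- intros w' Hw' Hnw'. unfold angle. rewrite D0, Rdiv_0_l, acos_0 by auto. lra.
      * left. split; auto. intros w Hw Hnw. apply NE. exists w; auto.
    + assert (pp : 0 < p) by lra.
      right. split.
      * exists P. split; auto. split.
        -- apply nonzero_dot. rewrite <- vnorm_sq. fold p. nra.
        -- unfold angle, t. fold B p. rewrite EP. f_equal. field. lra.
      * intros w Hw Hnw. unfold angle, t. fold B. apply acos_le.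
        -- apply ratio_bound; auto.
        -- lra.
        -- rewrite DS by auto. pose proof (cs_le n P w). fold p in H.
           pose proof (vnorm_pos n w Hnw).
           apply Rmult_le_reg_r with (B * vnorm n w). nra.
           replace (dot n P w / (B * vnorm n w) * (B * vnorm n w)) with (dot n P w) by (field; lra).
           replace (p / B * (B * vnorm n w)) with (p * vnorm n w) by (field; lra). lra.
  - intros Ht u Hu Hnu.
    assert (qp : 0 < q).
    { destruct Hq as [h|h]; auto. exfalso. rewrite <- h in EB.
      assert (p = B) by nra. unfold t in Ht. rewrite H, Rdiv_diag, acos_1 in Ht by lra. lra. }
    destruct (proj_ex n m a b) as [X [HX OX]].
    set (Y := vsub b X). set (N := vnorm n b). set (x := vnorm n X). set (y := vnorm n Y).
    assert (HN : 0 < N) by (apply vnorm_pos; auto).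
    apply ext_iff in Hu. destruct Hu as [w [d [Hw Hu]]].
    set (phi := angle n bt b).
    assert (Hphi : 0 <= phi) by apply acos_bound.
    assert (Hbd : 0 <= PI / 2 * (phi / t)).
    { pose proof PI_RGT_0. apply Rmult_le_pos. lra. apply Rmult_le_pos; auto. left; apply Rinv_0_lt_compat; auto. }
    destruct (Rlt_or_le phi t) as [Hlt|Hge].
    + set (cphi := dot n bt b / (B * N)).
      assert (Cb : -1 <= cphi <= 1) by (apply ratio_bound; auto).
      assert (Hc : p / B < cphi).
      { apply (acos_lt_rev cphi (p/B)); auto. lra. }
      assert (tle : t <= PI / 2).
      { unfold t. rewrite <- acos_0. apply acos_le; lra. }
      set (y0 := vadd w (vscal d X)).
      assert (Hy0 : in_span n m a y0) by (apply span_add; auto; apply span_scal; auto).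
      assert (Hu' : forall i, (i < n)%nat -> u i = vadd y0 (vscal d Y) i).
      { intros. rewrite Hu by auto. unfold y0, Y, vadd, vscal, vsub. ring. }
      destruct (Req_dec (d * dot n Y Y) 0) as [Z|NZ].
      * assert (Hus : in_span n m a u).
        { apply span_ext with y0; auto. intros i Hi. rewrite Hu' by auto. unfold vadd, vscal.
          destruct (Rmult_integral _ _ Z) as [d0|Y0].
          - rewrite d0. ring.
          - rewrite (dot_zero_coords n Y Y0 i Hi). ring. }
        exists u. split; [|split; auto].
        -- apply ext_iff. exists u, 0. split; auto. intros; ring.
        -- rewrite angle_self by auto. auto.
      * assert (dnz : d <> 0) by (intro h; apply NZ; rewrite h; ring).
        assert (YY : 0 < dot n Y Y).
        { destruct (dot_pos n Y) as [h|h]; auto. exfalso; apply NZ; rewrite <- h; ring. }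
        assert (yp : 0 < y).
        { unfold y, vnorm. apply sqrt_lt_R0; auto. }
        assert (Eyy : y * y = dot n Y Y) by apply vnorm_sq.
        assert (Eqq : q * q = dot n Q Q) by apply vnorm_sq.
        assert (OY : forall z, in_span n m a z -> dot n Y z = 0) by exact OX.
        assert (OQ : forall z, in_span n m a z -> dot n Q z = 0) by exact OP.
        set (g0 := d * y / q).
        set (v := vadd y0 (vscal g0 Q)).
        set (U' := vadd y0 (vscal d Y)).
        assert (Huu : dot n U' U' = dot n y0 y0 + d * d * (y * y)).
        { unfold U'. rewrite !dot_add_l, !dot_add_r, !dot_scal_l, !dot_scal_r.
          rewrite (dot_sym n y0 Y), OY by auto. rewrite Eyy. ring. }
        assert (Hvv : dot n v v = dot n y0 y0 + d * d * (y * y)).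
        { unfold v. rewrite !dot_add_l, !dot_add_r, !dot_scal_l, !dot_scal_r.
          rewrite (dot_sym n y0 Q), OQ by auto. rewrite <- Eqq. unfold g0. field. lra. }
        assert (Huv : dot n U' v = dot n y0 y0 + d * g0 * dot n Q Y).
        { unfold v, U'. rewrite !dot_add_l, !dot_add_r, !dot_scal_l, !dot_scal_r.
          rewrite (dot_sym n y0 Q), OQ, OY by auto. rewrite (dot_sym n Y Q). ring. }
        assert (Y0p : 0 <= dot n y0 y0) by apply dot_pos.
        assert (HnU : nonzero_vec n U') by (apply nonzero_ext with u; auto).
        assert (Hnv : nonzero_vec n v).
        { apply nonzero_dot. rewrite Hvv. assert (0 < d * d) by (apply Rsqr_pos_lt; auto). nra. }
        exists v. split; [|split; auto].
        { apply ext_iff. exists (vsub y0 (vscal g0 P)), g0. split.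
          - apply span_sub; auto. apply span_scal; auto.
          - intros. unfold v, Q, vadd, vsub, vscal. ring. }
        rewrite (angle_ext n u v U' v) by auto.
        set (s0 := dot n P X). set (e := dot n Q Y).
        assert (Ebb : dot n bt b = s0 + e).
        { rewrite (dot_ext n bt b (vadd Q P) (vadd X Y)) by (auto; intros; unfold Y, vadd, vsub; ring).
          rewrite !dot_add_l, !dot_add_r. rewrite (OQ X HX), (dot_sym n P Y), (OY P HP).
          unfold s0, e. ring. }
        assert (ENN : N * N = x * x + y * y).
        { unfold N, x, y. rewrite !vnorm_sq.
          rewrite (dot_ext n b b (vadd X Y) (vadd X Y)) by (intros; unfold Y, vadd, vsub; ring).
          rewrite !dot_add_l, !dot_add_r. rewrite (dot_sym n X Y), (OY X HX). ring. }
        assert (Hs : s0 <= p * x) by apply cs_le.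
        assert (He1 : e <= q * y) by apply cs_le.
        assert (Hx0 : 0 <= x) by apply vnorm_nonneg.
        assert (HpN : p * N < s0 + e).
        { unfold cphi in Hc. rewrite Ebb in Hc.
          apply Rmult_lt_compat_r with (r := B * N) in Hc; [|nra].
          replace (p / B * (B * N)) with (p * N) in Hc by (field; lra).
          replace ((s0 + e) / (B * N) * (B * N)) with (s0 + e) in Hc by (field; nra). lra. }
        destruct (core p q x y B N s0 e Hp qp Hx0 yp HB HN EB ENN Hs HpN) as [He0 Hcore].
        set (g := e / (y * q)).
        assert (Hg : 0 <= g <= 1).
        { unfold g. split. apply Rmult_le_pos; auto. left; apply Rinv_0_lt_compat; nra.
          apply Rmult_le_reg_r with (y * q). nra. unfold Rdiv. rewrite Rmult_assoc, Rinv_l by nra. lra. }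
        assert (NUv : vnorm n U' = vnorm n v).
        { unfold vnorm. rewrite Huu, Hvv. auto. }
        assert (Hr : g <= dot n U' v / (vnorm n U' * vnorm n v)).
        { rewrite <- NUv, vnorm_sq, Huu, Huv. change (dot n Q Y) with e.
          assert (0 < d * d * (y * y)) by (apply Rmult_lt_0_compat; [apply Rsqr_pos_lt; auto|nra]).
          apply Rmult_le_reg_r with (dot n y0 y0 + d * d * (y * y)). lra.
          replace ((dot n y0 y0 + d * g0 * e) / (dot n y0 y0 + d * d * (y * y)) * (dot n y0 y0 + d * d * (y * y))) with (dot n y0 y0 + d * g0 * e) by (field; lra).
          replace (d * g0 * e) with (d * d * (y * y) * g) by (unfold g0, g; field; lra).
          assert (0 <= (1 - g) * dot n y0 y0) by (apply Rmult_le_pos; lra).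
          match goal with |- ?A <= ?B => apply Rle_trans with (A + (1 - g) * dot n y0 y0); [lra|right; ring] end. }
        unfold angle at 1.
        apply Rle_trans with (acos g).
        { apply acos_le; auto. lra. apply ratio_bound; auto. }
        set (th := PI / 2 * (phi / t)).
        assert (Eth : th = PI * phi / (2 * t)) by (unfold th; field; lra).
        assert (th_lt : th < PI / 2).
        { unfold th. pose proof PI_RGT_0. rewrite <- (Rmult_1_r (PI/2)) at 2. apply Rmult_lt_compat_l. lra.
          apply Rmult_lt_reg_r with t; auto. unfold Rdiv. rewrite Rmult_assoc, Rinv_l by lra. lra. }
        assert (th_ge : 0 <= th) by (unfold th; auto).
        pose proof (key_trig phi t Hphi (Rlt_le _ _ Hlt) Ht tle) as KT. rewrite <- Eth in KT.
        assert (Est : sin t = q / B).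
        { unfold t. rewrite sin_acos by lra. unfold Rsqr.
          replace (1 - p / B * (p / B)) with ((B * B - p * p) / (B * B)) by (field; lra).
          rewrite EB. replace ((p * p + q * q - p * p) / ((p * p + q * q))) with (q * q / (B * B)) by (rewrite EB; field; nra).
          replace (q * q / (B * B)) with (q / B * (q / B)) by (field; lra).
          apply sqrt_square. apply Rmult_le_pos; [lra|left; apply Rinv_0_lt_compat; lra]. }
        assert (Esp : sin phi = sqrt (1 - cphi * cphi)).
        { unfold phi, angle. fold B N. fold cphi. rewrite sin_acos by auto. reflexivity. }
        assert (sth0 : 0 <= sin th) by (apply sin_ge_0; pose proof PI_RGT_0; lra).
        assert (cth0 : 0 <= cos th) by (apply cos_ge_0; pose proof PI_RGT_0; lra).
        assert (Hsq : 1 - cphi * cphi <= (q / B * sin th) * (q / B * sin th)).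
        { rewrite Est, Esp in KT. assert (0 <= 1 - cphi * cphi) by nra.
          pose proof (sqrt_sqrt _ H). pose proof (sqrt_pos (1 - cphi * cphi)). nra. }
        assert (Hcore' : q * q * (1 - g * g) <= B * B * (1 - cphi * cphi)).
        { unfold cphi. rewrite Ebb. unfold g. replace (e / (y * q) * (e / (y * q))) with ((e / (y * q))^2) by ring.
          replace ((s0 + e) / (B * N) * ((s0 + e) / (B * N))) with (((s0 + e) / (B * N))^2) by ring. exact Hcore. }
        assert (H1g : 1 - g * g <= sin th * sin th).
        { assert (B * B * (1 - cphi * cphi) <= q * q * (sin th * sin th)).
          { apply Rmult_le_compat_l with (r := B * B) in Hsq; [|nra].
            replace (B * B * (q / B * sin th * (q / B * sin th))) with (q * q * (sin th * sin th)) in Hsq by (field; lra). lra. }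
          assert (q * q * (1 - g * g) <= q * q * (sin th * sin th)) by lra.
          apply Rmult_le_reg_l with (q * q). nra. lra. }
        assert (Hcg : cos th <= g).
        { pose proof (sin2_cos2 th). unfold Rsqr in H. nra. }
        apply Rle_trans with (acos (cos th)).
        { pose proof (COS_bound th). apply acos_le; lra. }
        rewrite acos_cos. lra. pose proof PI_RGT_0. lra.
    + assert (Hpi : PI / 2 <= PI / 2 * (phi / t)).
      { pose proof PI_RGT_0. rewrite <- (Rmult_1_r (PI/2)) at 1. apply Rmult_le_compat_l. lra.
        apply Rmult_le_reg_r with t; auto. unfold Rdiv. rewrite Rmult_assoc, Rinv_l by lra. lra. }
      destruct (Rle_or_lt 0 (dot n u bt)) as [Hd|Hd].
      * exists bt. split; [|split; auto].
        -- exists (fun _ => 0), 1. intros. rewrite fsum_zero by (intros; ring). ring.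
        -- pose proof (angle_le_pi2 n u bt Hnu Hbt Hd). lra.
      * assert (Hnv : nonzero_vec n (vscal (-1) bt)).
        { destruct Hbt as [i [Hi Hx]]. exists i. split; auto. unfold vscal. lra. }
        exists (vscal (-1) bt). split; [|split; auto].
        -- exists (fun _ => 0), (-1). intros. rewrite fsum_zero by (intros; ring). unfold vscal. ring.
        -- assert (0 <= dot n u (vscal (-1) bt)) by (rewrite dot_scal_r; lra).
           pose proof (angle_le_pi2 n u _ Hnu Hnv H). lra.
Qed.
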